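(* Let $Q_d$ be the $d$-dimensional hypercube graph, with $n = 2^d$ vertices. Then $\chi_{2K_2}(Q_2) = 2$, $\chi_{2K_2}(Q_3) = 4$, and for every $d \ge 4$, $$\chi_{2K_2}(Q_d) \ge \sqrt{\frac{d}{2d-1}\,2^d} + \frac12 = \sqrt{\frac{n}{2}\cdot\frac{1}{1 - 1/(2\lg n)}} + \frac12,$$ where $\lg$ denotes the base-2 logarithm.
   Context: All graphs are finite and simple. For a fixed bipartite graph $H$, a proper vertex coloring of a graph $G$ is called an $H$-avoiding coloring if for any two color classes, the subgraph of $G$ induced by their union contains no induced subgraph isomorphic to $H$. $\chi_H(G)$ denotes the minimum number of colors in an $H$-avoiding coloring of $G$. $2K_2$ is the disjoint union of two edges. $Q_d$ has vertex set $\{0,1\}^d$, two vertices adjacent iff they differ in exactly one coordinate. *)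

(* Defs.v *)
From mathcomp Require Import all_boot all_order all_algebra.
From mathcomp Require Import reals.
Set Implicit Arguments. Unset Strict Implicit. Unset Printing Implicit Defensive.

(* A graph is a relation e on a finite vertex type; simple graphs are those
   with e symmetric and irreflexive (as is the case for all graphs below). *)

Section HAvoid.
Variables (TH : finType) (eH : rel TH) (TG : finType) (eG : rel TG).

Definition has_induced_copy (S : {set TG}) : bool :=
  [exists f : {ffun TH -> TG},
     [&& injectiveb f, [forall x, f x \in S] &
         [forall x, forall y, eH x y == eG (f x) (f y)]]].

Definition proper_coloring k (c : {ffun TG -> 'I_k}) : bool :=
  [forall x, forall y, eG x y ==> (c x != c y)].

Definition H_avoiding_coloring k (c : {ffun TG -> 'I_k}) : bool :=
  proper_coloring c &&
  [forall a : 'I_k, forall b : 'I_k,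
     ~~ has_induced_copy [set v | (c v == a) || (c v == b)]].

Definition H_avoiding_colorable (k : nat) : bool :=
  [exists c : {ffun TG -> 'I_k}, H_avoiding_coloring c].

(* For a simple graph G, k = #|TG| always works (injective coloring), so the
   minimum below is attained in the range and is the true minimum. *)
Definition chi_H : nat :=
  \big[minn/#|TG|]_(k < #|TG|.+1 | H_avoiding_colorable k) (k : nat).
End HAvoid.

(* 2K_2 : vertices 0,1,2,3 with edges {0,1} and {2,3} *)
Definition twoK2 : rel 'I_4 := fun x y => (x %/ 2 == y %/ 2)%N && (x != y).

Definition cube (d : nat) := {ffun 'I_d -> bool}.
Definition cube_adj (d : nat) : rel (cube d) :=
  fun x y => #|[set i : 'I_d | x i != y i]| == 1%N.

Definition chi_2K2_cube (d : nat) : nat := chi_H twoK2 (@cube_adj d).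

(* Main.v *)
Require Import Defs.
From mathcomp Require Import all_boot all_order all_algebra.
From mathcomp Require Import reals.
From mathcomp Require Import zify ring lra.
Import Order.TTheory GRing.Theory Num.Theory.
Set Implicit Arguments. Unset Strict Implicit. Unset Printing Implicit Defensive.

Section Gen.
Variables (T : finType) (e : rel T).
Hypothesis esym : symmetric e.
Hypothesis eirr : irreflexive e.

Lemma copyP (S : {set T}) x y x' y' : x \in S -> y \in S -> x' \in S -> y' \in S ->
  e x y -> e x' y' -> ~~ e x x' -> ~~ e x y' -> ~~ e y x' -> ~~ e y y' ->
  has_induced_copy twoK2 e S.
Proof.
move=> xS yS x'S y'S exy ex'y' nxx' nxy' nyx' nyy'.
have dxy : x != y by apply: contraTneq exy => ->; rewrite eirr.
have dx'y' : x' != y' by apply: contraTneq ex'y' => ->; rewrite eirr.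
have dxx' : x != x' by apply: contraTneq exy => ->; rewrite esym.
have dxy' : x != y' by apply: contraTneq exy => ->; rewrite esym.
have dyx' : y != x' by apply: contraTneq exy => ->.
have dyy' : y != y' by apply: contraTneq exy => ->.
apply/existsP; exists [ffun i : 'I_4 => nth x [:: x; y; x'; y'] i].
apply/and3P; split.
- apply/injectiveP => i j; rewrite !ffunE.
  case: i => [[|[|[|[|i]]]] Hi] //; case: j => [[|[|[|[|j]]]] Hj] //= E;
    try (by apply: val_inj);
    by move: dxy dx'y' dxx' dxy' dyx' dyy'; rewrite E eqxx.
- apply/forallP => i; rewrite ffunE.
  by case: i => [[|[|[|[|i]]]] Hi].
- apply/forallP => i; apply/forallP => j; rewrite !ffunE.
  case: i => [[|[|[|[|i]]]] Hi] //; case: j => [[|[|[|[|j]]]] Hj] //=;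
   rewrite /twoK2 /= ?eirr ?exy ?ex'y' ?(negbTE nxx') ?(negbTE nxy') ?(negbTE nyx') ?(negbTE nyy') //;
   try (rewrite esym ?exy ?ex'y' ?(negbTE nxx') ?(negbTE nxy') ?(negbTE nyx') ?(negbTE nyy') //).
Qed.

Lemma no_copy (S : {set T}) x y x' y' : ~~ has_induced_copy twoK2 e S ->
  x \in S -> y \in S -> x' \in S -> y' \in S ->
  e x y -> e x' y' -> ~~ e x x' -> ~~ e y y' -> e x y' || e y x'.
Proof.
move=> H xS yS x'S y'S exy ex'y' nxx' nyy'.
move: H; apply: contraLR => /norP [n1 n2]; rewrite negbK.
exact: (copyP xS yS x'S y'S).
Qed.
End Gen.

Section Flip.
Variable d : nat.
Local Notation T := (cube d).
Local Notation e := (@cube_adj d).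

Definition flip (x : T) (i : 'I_d) : T := [ffun j => if j == i then ~~ x j else x j].

Lemma flipE (x : T) (i j : 'I_d) : flip x i j = (if j == i then ~~ x j else x j).
Proof. by rewrite ffunE. Qed.

Lemma adjP (x y : T) : reflect (exists i, y = flip x i) (e x y).
Proof.
rewrite /cube_adj; apply: (iffP cards1P) => [[i Hi]|[i ->]]; exists i.
- apply/ffunP => j; rewrite flipE.
  move/setP: Hi => /(_ j); rewrite !inE.
  case: (j =P i) => [->|_].
    by case: (x i); case: (y i).
  by case: (x j); case: (y j).
- apply/setP => j; rewrite !inE flipE.
  by case: (j =P i) => _; case: (x j).
Qed.

Lemma adj_sym : symmetric e.
Proof.
move=> x y; rewrite /cube_adj.
suff -> : [set i | x i != y i] = [set i | y i != x i] by [].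
by apply/setP => i; rewrite !inE eq_sym.
Qed.

Lemma adj_irr : irreflexive e.
Proof.
move=> x; rewrite /cube_adj.
have -> : [set i | x i != x i] = set0 by apply/setP => i; rewrite !inE eqxx.
by rewrite cards0.
Qed.

Lemma adj_flip (x : T) (i : 'I_d) : e x (flip x i).
Proof. by apply/adjP; exists i. Qed.

Lemma flip_neq (x : T) (i : 'I_d) : flip x i != x.
Proof.
apply/negP => /eqP /ffunP /(_ i); rewrite flipE eqxx; by case: (x i).
Qed.

Lemma flip_inj (x : T) : injective (flip x).
Proof.
move=> i j /ffunP /(_ i); rewrite !flipE eqxx.
by case: eqP => // _; case: (x i).
Qed.

Lemma flipC (x : T) (i j : 'I_d) : flip (flip x i) j = flip (flip x j) i.
Proof.
apply/ffunP => k; rewrite !flipE.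
by case: (k =P i) => [->|]; case: (_ =P j) => [->|].
Qed.

Lemma flip2_neq (x : T) (i j : 'I_d) : i != j -> flip (flip x i) j != x.
Proof.
move=> nij; apply/negP => /eqP /ffunP /(_ i); rewrite !flipE eqxx (negbTE nij).
by case: (x i).
Qed.

Lemma diff2 (x : T) (i j k : 'I_d) : i != j -> (x k != flip (flip x i) j k) = (k == i) || (k == j).
Proof.
move=> nij; rewrite !flipE.
case: (k =P i) => [->|_]; case: (_ =P j) => [E|] //=; try by case: (x _).
by move: nij; rewrite E eqxx.
Qed.

Lemma card_nbr (x : T) : #|[set y | e x y]| = d.
Proof.
have -> : [set y | e x y] = [set flip x i | i : 'I_d].
  apply/setP => y; rewrite inE; apply/adjP/imsetP => [[i ->]|[i _ ->]]; by exists i.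
by rewrite card_imset ?card_ord //; apply: flip_inj.
Qed.

Lemma common2 (x y z1 z2 z3 : T) : x != y ->
  e x z1 -> e z1 y -> e x z2 -> e z2 y -> e x z3 -> e z3 y ->
  z1 != z2 -> z1 != z3 -> z2 != z3 -> False.
Proof.
move=> nxy /adjP [i1 ->] /adjP [j1 E1] /adjP [i2 ->] /adjP [j2 E2]
  /adjP [i3 ->] /adjP [j3 E3] n12 n13 n23.
have nij m j (E : y = flip (flip x m) j) : m != j.
  apply: contra_neq nxy => mj; rewrite E mj.
  by apply/ffunP => k; rewrite !flipE; case: eqP => //; case: (x k).
have h1 := nij _ _ E1; have h2 := nij _ _ E2; have h3 := nij _ _ E3.
have D m j (E : y = flip (flip x m) j) (mj : m != j) : x m != y m.
  by rewrite E diff2 // eqxx.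
have M k : x k != y k -> (k == i1) || (k == j1) by rewrite E1 diff2.
have /M a2 := D _ _ E2 h2.
have /M a3 := D _ _ E3 h3.
have ni12 : i2 != i1 by apply: contra_neq n12 => ->.
have ni13 : i3 != i1 by apply: contra_neq n13 => ->.
have ni23 : i2 != i3 by apply: contra_neq n23 => ->.
move: a2 a3; rewrite (negbTE ni12) (negbTE ni13) /= => /eqP a2 /eqP a3.
by move: ni23; rewrite a2 a3 eqxx.
Qed.
End Flip.

Section Pair.
Variable d : nat.
Hypothesis d3 : (3 <= d)%N.
Local Notation T := (cube d).
Local Notation e := (@cube_adj d).

Definition Hc (A B : {set T}) := forall x x' y y', x \in A -> x' \in A -> y \in B -> y' \in B ->
  e x y -> e x' y' -> x != x' -> y != y' -> e x y' || e x' y.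

Lemma Hc_sym A B : Hc A B -> Hc B A.
Proof.
move=> H x x' y y' xB x'B yA y'A exy ex'y' xx' yy'.
have := H y y' x x' yA y'A xB x'B; rewrite !(adj_sym y) !(adj_sym y') => /(_ exy ex'y' yy' xx').
by rewrite orbC.
Qed.

Definition Nb (X : {set T}) v := [set w in X | e v w].

Lemma maxN A B : Hc A B -> forall a, a \in A ->
  (forall x, x \in A -> #|Nb B x| <= #|Nb B a|)%N ->
  forall x, x \in A -> Nb B x \subset Nb B a.
Proof.
move=> H a aA amax x xA; apply/subsetP => y yx; apply/negPn/negP => ya.
have xa : x != a by apply: contraNneq ya => <-.
have sub : Nb B a \subset Nb B x.
  apply/subsetP => y' y'a.
  have yy' : y != y' by apply: contraNneq ya => ->.
  move: (yx) (y'a); rewrite !inE => /andP [yB exy] /andP [y'B eay'].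
  rewrite y'B /=.
  have := H x a y y' xA aA yB y'B exy eay' xa yy'.
  move: ya; rewrite inE yB /= => /negbTE ->; by rewrite orbF.
have : Nb B a \proper Nb B x by apply/properP; split => //; exists y.
by move/proper_card; rewrite ltnNge amax.
Qed.

Definition Pset (A B : {set T}) := [set p : T * T | (p.1 \in A) && (p.2 \in B) && e p.1 p.2].

Lemma pair_bound A B : Hc A B -> (#|Pset A B| <= 2 * d - 1)%N.
Proof.
move=> H.
case: (set_0Vmem (Pset A B)) => [-> | [p0 p0P]]; first by rewrite cards0.
move: (p0P); rewrite inE => /andP [/andP [x0A y0B] e0].
have H' := Hc_sym H.
case: (arg_maxnP (fun x => #|Nb B x|) x0A) => a aA amaxr.
case: (arg_maxnP (fun y => #|Nb A y|) y0B) => b bB bmaxr.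
have {}aA : a \in A := aA.
have {}bB : b \in B := bB.
have SA := maxN H aA amaxr.
have SB := maxN H' bB bmaxr.
have inEa x y : x \in A -> y \in B -> e x y -> y \in Nb B a.
  move=> xA yB exy; apply: (subsetP (SA _ xA)); by rewrite inE yB exy.
have inFb x y : x \in A -> y \in B -> e x y -> x \in Nb A b.
  move=> xA yB exy; apply: (subsetP (SB _ yB)); by rewrite inE xA adj_sym exy.
have eab : e a b.
  have := inEa _ _ x0A y0B e0; rewrite inE => /andP [_ eay0].
  have := inFb _ _ aA y0B eay0; by rewrite inE adj_sym => /andP [].
pose R := [set p in Pset A B | (p.1 != a) && (p.2 != b)].
have inR x y : x \in A -> y \in B -> e x y -> x != a -> y != b -> (x, y) \in R.
  by move=> xA yB exy xa yb; rewrite !inE /= xA yB exy xa yb.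
have outR x y : (x, y) \in R ->
   [/\ x \in A, y \in B, e x y, x != a & y != b].
  by rewrite !inE /= => /andP [/andP [/andP [-> ->] ->] /andP [-> ->]].
have one_a x y y' : (x, y) \in R -> (x, y') \in R -> y = y'.
  move=> /outR [xA yB exy xa yb] /outR [_ y'B exy' _ y'b].
  apply/eqP/negP => /negP yy'.
  have := inEa _ _ xA yB exy; rewrite inE => /andP [_ eay].
  have := inEa _ _ xA y'B exy'; rewrite inE => /andP [_ eay'].
  have := inFb _ _ xA yB exy; rewrite inE => /andP [_ ebx].
  apply: (@common2 d x a y y' b xa exy _ exy' _ _ _ yy' yb y'b);
    by rewrite adj_sym.
have one_b x x' y : (x, y) \in R -> (x', y) \in R -> x = x'.
  move=> /outR [xA yB exy xa yb] /outR [x'A _ ex'y x'a _].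
  apply/eqP/negP => /negP xx'.
  have := inFb _ _ xA yB exy; rewrite inE => /andP [_ ebx].
  have := inFb _ _ x'A yB ex'y; rewrite inE => /andP [_ ebx'].
  have := inEa _ _ xA yB exy; rewrite inE => /andP [_ eay].
  apply: (@common2 d y b x x' a yb _ _ _ _ _ eab xx' xa x'a);
    by rewrite adj_sym.
have Runiq x y x' y' : (x, y) \in R -> (x', y') \in R -> (x, y) = (x', y').
  move=> Rxy Rx'y'.
  case: (x =P x') => [xx'|/eqP xx'].
    by rewrite xx' in Rxy *; rewrite (one_a _ _ _ Rxy Rx'y').
  case: (y =P y') => [yy'|/eqP yy'].
    by rewrite yy' in Rxy *; rewrite (one_b _ _ _ Rxy Rx'y').
  move: (Rxy) (Rx'y') => /outR [xA yB exy xa yb] /outR [x'A y'B ex'y' x'a y'b].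
  case/orP: (H x x' y y' xA x'A yB y'B exy ex'y' xx' yy') => [exy'|ex'y].
    by have := one_a _ _ _ Rxy (inR _ _ xA y'B exy' xa y'b) => E; rewrite E eqxx in yy'.
  by have := one_b _ _ _ Rxy (inR _ _ x'A yB ex'y x'a yb) => E; rewrite E eqxx in xx'.
have Rle1 : (#|R| <= 1)%N.
  by apply/card_le1_eqP => [[x y] [x' y']] Rp Rq; apply: Runiq.
have cEa : (#|Nb B a| <= d)%N.
  have sub : Nb B a \subset [set z | e a z].
    by apply/subsetP => z; rewrite !inE => /andP [].
  by have := subset_leq_card sub; rewrite card_nbr.
have cFb : (#|Nb A b| <= d)%N.
  have sub : Nb A b \subset [set z | e b z].
    by apply/subsetP => z; rewrite !inE => /andP [].
  by have := subset_leq_card sub; rewrite card_nbr.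
have Rfull : R != set0 -> (#|Nb B a| < d)%N || (#|Nb A b| < d)%N.
  case/set0Pn => [[x y] Rxy]; rewrite !ltnNge -negb_and.
  apply/negP => /andP [ca cb].
  have fa : Nb B a = [set z | e a z].
    apply/eqP; rewrite eqEcard card_nbr ca andbT; apply/subsetP => z.
    by rewrite !inE => /andP [].
  have fb : Nb A b = [set z | e b z].
    apply/eqP; rewrite eqEcard card_nbr cb andbT; apply/subsetP => z.
    by rewrite !inE => /andP [].
  have inB z : e a z -> z \in B.
    move=> eaz; have : z \in Nb B a by rewrite fa inE.
    by rewrite inE => /andP [].
  have inA z : e b z -> z \in A.
    move=> ebz; have : z \in Nb A b by rewrite fb inE.
    by rewrite inE => /andP [].
  move: (Rxy) => /outR [xA yB exy xa yb].
  have := inFb _ _ xA yB exy; rewrite inE => /andP [_ /adjP [i xi]].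
  have /adjP [j aj] : e b a by rewrite adj_sym.
  have ij : i != j by apply: contra_neq xa => ij; rewrite xi aj ij.
  have : (0 < #|~: [set i; j]|)%N.
    have := cardsC [set i; j]; rewrite card_ord => E.
    have c2 : (#|[set i; j]| <= 2)%N by rewrite cards2; case: (_ != _).
    rewrite lt0n; apply/eqP => E0.
    by have := d3; rewrite -E E0 addn0 => /leq_trans /(_ c2).
  case/card_gt0P => k; rewrite !inE negb_or => /andP [ki kj].
  have x'A : flip b k \in A by apply: inA; apply: adj_flip.
  have y'B : flip a k \in B by apply: inB; apply: adj_flip.
  have ex'y' : e (flip b k) (flip a k) by rewrite aj flipC; apply: adj_flip.
  have x'a : flip b k != a.
    by rewrite aj; apply/negP => /eqP /flip_inj /eqP; rewrite (negbTE kj).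
  have y'b : flip a k != b by rewrite aj; apply: flip2_neq; rewrite eq_sym.
  have := Runiq _ _ _ _ Rxy (inR _ _ x'A y'B ex'y' x'a y'b) => -[E _].
  by move: E; rewrite xi => /flip_inj E; rewrite E eqxx in ki.
pose S1 := [set (a, y) | y in Nb B a].
pose S2 := [set (x, b) | x in Nb A b].
have sub : Pset A B \subset (S1 :|: S2) :|: R.
  apply/subsetP => -[x y] Pxy; move: (Pxy); rewrite inE /= => /andP [/andP [xA yB] exy].
  rewrite !in_setU; case: (x =P a) => [xa|/eqP xa].
    by rewrite /S1 -xa; apply/orP; left; apply/orP; left; apply/imsetP; exists y => //; rewrite xa; exact: inEa exy.
  case: (y =P b) => [yb|/eqP yb].
    by rewrite /S2 -yb; apply/orP; left; apply/orP; right; apply/imsetP; exists x => //; rewrite yb; exact: inFb exy.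
  by rewrite (inR _ _ xA yB exy xa yb) orbT.
have cS1 : #|S1| = #|Nb B a| by rewrite card_imset // => y y' [].
have cS2 : #|S2| = #|Nb A b| by rewrite card_imset // => x x' [].
have cI : (0 < #|S1 :&: S2|)%N.
  apply/card_gt0P; exists (a, b); rewrite inE; apply/andP; split; apply/imsetP.
    by exists b => //; rewrite /Nb inE bB eab.
  by exists a => //; rewrite /Nb inE aA adj_sym eab.
have U1 := cardsUI S1 S2.
have U2 := cardsUI (S1 :|: S2) R.
have := subset_leq_card sub.
have Rc : #|R| = 0%N \/ (#|Nb B a| < d)%N \/ (#|Nb A b| < d)%N.
  case: (R =P set0) => [R0|/eqP Rn]; first by left; rewrite R0 cards0.
  by right; apply/orP; exact: Rfull Rn.
rewrite -cS1 -cS2 in cEa cFb Rc.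
move: U1 U2 cEa cFb Rc cI Rle1.
move: #|S1| #|S2| #|S1 :&: S2| #|S1 :|: S2| #|R| #|(S1 :|: S2) :|: R| #|(S1 :|: S2) :&: R| #|Pset A B|.
move=> *; lia.
Qed.
End Pair.

Section Count.
Variables (d k : nat) (c : {ffun cube d -> 'I_k}).
Hypothesis d3 : (3 <= d)%N.
Hypothesis Hcol : H_avoiding_coloring twoK2 (@cube_adj d) c.
Local Notation T := (cube d).
Local Notation e := (@cube_adj d).

Lemma card_Pall : #|[set p : T * T | e p.1 p.2]| = (2 ^ d * d)%N.
Proof.
have -> : [set p : T * T | e p.1 p.2] = [set (q.1, flip q.1 q.2) | q : T * 'I_d].
  apply/setP => -[x y]; rewrite inE /=; apply/adjP/imsetP.
    by move=> [i ->]; exists (x, i).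
  by move=> [[x' i] _ [-> ->]]; exists i.
rewrite card_imset; first by rewrite card_prod card_ffun card_bool card_ord.
by move=> [x i] [x' i'] /= [xx']; rewrite -xx' => /flip_inj ->.
Qed.

Lemma proper_ne x y : e x y -> c x != c y.
Proof.
by move: Hcol => /andP [/forallP /(_ x) /forallP /(_ y) /implyP H _].
Qed.

Definition cls a := [set x | c x == a].

Lemma class_Hc a b : a != b -> Hc (cls a) (cls b).
Proof.
move=> ab x x' y y' xA x'A yB y'B exy ex'y' xx' yy'.
move: Hcol => /andP [_ /forallP /(_ a) /forallP /(_ b) Hn].
have inS v : v \in cls a -> v \in [set v | (c v == a) || (c v == b)].
  by rewrite !inE => ->.
have inS' v : v \in cls b -> v \in [set v | (c v == a) || (c v == b)].
  by rewrite !inE => ->; rewrite orbT.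
have nA u v : u \in cls a -> v \in cls a -> ~~ e u v.
  rewrite !inE => /eqP ua /eqP va; apply/negP => /proper_ne; by rewrite ua va eqxx.
have nB u v : u \in cls b -> v \in cls b -> ~~ e u v.
  rewrite !inE => /eqP ua /eqP va; apply/negP => /proper_ne; by rewrite ua va eqxx.
have := no_copy (@adj_sym d) (@adj_irr d) Hn (inS _ xA) (inS' _ yB) (inS _ x'A) (inS' _ y'B)
   exy ex'y' (nA _ _ xA x'A) (nB _ _ yB y'B).
by rewrite (adj_sym y).
Qed.

Lemma Pset_diag a : #|Pset (cls a) (cls a)| = 0%N.
Proof.
apply/eqP; rewrite cards_eq0; apply/eqP/setP => -[x y]; rewrite !inE /=.
apply/negbTE/negP => /andP [/andP [/eqP xa /eqP ya] exy].
by have := proper_ne exy; rewrite xa ya eqxx.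
Qed.

Lemma count_main : (d * 2 ^ d <= k * (k - 1) * (2 * d - 1))%N.
Proof.
have E : #|[set p : T * T | e p.1 p.2]| =
   (\sum_(q : 'I_k * 'I_k) #|Pset (cls q.1) (cls q.2)|)%N.
  rewrite -sum1_card (partition_big (fun p : T * T => (c p.1, c p.2)) xpredT) //=.
  apply: eq_bigr => -[a b] _; rewrite -sum1_card; apply: eq_bigl => -[x y].
  rewrite !inE /= xpair_eqE.
  by case: (e x y); rewrite ?andbT ?andbF.
rewrite -(pair_bigA _ (fun a b => #|Pset (cls a) (cls b)|)) /= card_Pall in E.
have le : (\sum_(a < k) \sum_(b < k) #|Pset (cls a) (cls b)| <=
           \sum_(a < k) \sum_(b < k) (if a == b then 0 else 2 * d - 1))%N.
  apply: leq_sum => a _; apply: leq_sum => b _.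
  case: eqP => [<-|/eqP ab]; first by rewrite Pset_diag.
  exact: pair_bound (class_Hc ab).
have S : (\sum_(a < k) \sum_(b < k) (if a == b then 0 else 2 * d - 1) =
          k * ((k - 1) * (2 * d - 1)))%N.
  rewrite -[in RHS](card_ord k) -sum_nat_const.
  apply: eq_bigr => a _; rewrite (bigD1 a) //= eqxx add0n.
  rewrite (eq_bigr (fun _ => 2 * d - 1)%N); last by move=> b; rewrite eq_sym => /negbTE ->.
  by rewrite sum_nat_const cardC1 card_ord !subn1.
rewrite -mulnA -S mulnC E; exact: le.
Qed.
End Count.

Section Chi.
Variables (TG : finType) (eG : rel TG).

Lemma chi_lb (P : nat -> Prop) : P #|TG| ->
  (forall k, H_avoiding_colorable twoK2 eG k -> P k) -> P (chi_H twoK2 eG).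
Proof.
move=> P0 Pk; rewrite /chi_H; apply: big_ind => //.
  by move=> x y Px Py; rewrite /minn; case: ifP.
by move=> i Hi; apply: Pk.
Qed.

Lemma bigmin_le (I : eqType) (r : seq I) (P : pred I) (F : I -> nat) x i :
  i \in r -> P i -> (\big[minn/x]_(j <- r | P j) F j <= F i)%N.
Proof.
elim: r => // j r IH; rewrite inE big_cons => /orP [/eqP <- -> | ir Pi].
  exact: geq_minl.
case: (P j); last exact: IH.
by rewrite geq_min IH ?orbT.
Qed.

Lemma chi_eq m : (m <= #|TG|)%N -> H_avoiding_colorable twoK2 eG m ->
  (forall k, (k < m)%N -> ~~ H_avoiding_colorable twoK2 eG k) ->
  chi_H twoK2 eG = m.
Proof.
move=> mT cm nk; apply/eqP; rewrite eqn_leq; apply/andP; split.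
  rewrite /chi_H.
  have mT' : (m < #|TG|.+1)%N by [].
  exact: (@bigmin_le _ _ (fun k : 'I_#|TG|.+1 => H_avoiding_colorable twoK2 eG k)
     (fun k : 'I_#|TG|.+1 => (k : nat)) #|TG| (Ordinal mT') (mem_index_enum _) cm).
apply: (@chi_lb (fun x => m <= x)%N) => // k ck.
by rewrite leqNgt; apply/negP => /nk; rewrite ck.
Qed.
End Chi.

Lemma card_cube d : #|cube d| = (2 ^ d)%N.
Proof. by rewrite card_ffun card_bool card_ord. Qed.

Lemma chi_count d : (3 <= d)%N ->
  (d * 2 ^ d <= chi_2K2_cube d * (chi_2K2_cube d - 1) * (2 * d - 1))%N.
Proof.
move=> d3; rewrite /chi_2K2_cube.
apply: (@chi_lb _ _ (fun k => d * 2 ^ d <= k * (k - 1) * (2 * d - 1))%N).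
  rewrite card_cube.
  have : (2 <= 2 ^ d)%N by rewrite -{1}(expn1 2) leq_pexp2l //; apply: leq_trans d3.
  move: (2 ^ d)%N => N HN; nia.
move=> k; rewrite /H_avoiding_colorable => /existsP [c Hc]; exact: (count_main d3 Hc).
Qed.


Local Open Scope ring_scope.

Lemma real_bound (R : realType) (d k : nat) : (1 <= d)%N ->
  (d * 2 ^ d <= k * (k - 1) * (2 * d - 1))%N ->
  Num.sqrt ((d%:R / (2 * d%:R - 1)) * 2%:R ^+ d) + 2%:R^-1 <= (k%:R : R).
Proof.
move=> d1 H.
have k1 : (1 <= k)%N.
  case: k H => //; rewrite !mul0n leqn0 muln_eq0 expn_eq0 /=.
  by case: d d1.
have z0 : (0 : R) < 2 * d%:R - 1.
  have : (1 : R) <= d%:R by rewrite ler1n.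
  lra.
have E1 : ((2 * d - 1)%:R : R) = 2 * d%:R - 1 by rewrite natrB ?natrM //; lia.
have Ek : ((k - 1)%:R : R) = k%:R - 1 by rewrite natrB.
have HR : (d%:R * 2%:R ^+ d : R) <= k%:R * (k%:R - 1) * (2 * d%:R - 1).
  by rewrite -E1 -Ek -natrX -!natrM ler_nat.
have HX : (d%:R / (2 * d%:R - 1)) * 2%:R ^+ d <= (k%:R - 2^-1 : R) ^+ 2.
  rewrite mulrAC ler_pdivrMr //.
  apply: (le_trans HR); rewrite ler_wpM2r //; first lra.
  nra.
have k0 : (0 : R) <= k%:R - 2^-1.
  have : (1 : R) <= k%:R by rewrite ler1n.
  lra.
have := ler_wsqrtr HX; rewrite sqrtr_sqr ger0_norm //.
lra.
Qed.

Lemma card_setord d (P : pred 'I_d) : #|[set i | P i]| = (\sum_(i < d) P i)%N.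
Proof.
rewrite -sum1_card big_mkcond /=; apply: eq_bigr => i _; rewrite inE.
by case: (P i).
Qed.

Definition i3_1 : 'I_3 := lift ord0 ord0.
Definition i3_2 : 'I_3 := lift ord0 (lift ord0 ord0).
Definition dec3 (t : bool * bool * bool) : cube 3 :=
  [ffun i : 'I_3 => nth false [:: t.1.1; t.1.2; t.2] i].
Definition enc3 (x : cube 3) := (x ord0, x i3_1, x i3_2).
Definition adj3 (t s : bool * bool * bool) :=
  ((t.1.1 != s.1.1) + (t.1.2 != s.1.2) + (t.2 != s.2) == 1)%N.

Lemma adj_dec3 t s : cube_adj (dec3 t) (dec3 s) = adj3 t s.
Proof.
rewrite /cube_adj card_setord !big_ord_recl big_ord0 /= !ffunE /=.
by rewrite /adj3 addn0 addnA.
Qed.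

Lemma dec3K x : dec3 (enc3 x) = x.
Proof.
apply/ffunP => i; rewrite ffunE /=.
case: i => [[|[|[|m]]] Hm] //=; congr (x _); exact: val_inj.
Qed.

Definition all3 : seq (bool * bool * bool) :=
  [:: (false, false, false); (false, false, true); (false, true, false); (false, true, true); (true, false, false); (true, false, true); (true, true, false); (true, true, true)].

Lemma enc3_all x : enc3 x \in all3.
Proof. by rewrite /enc3; case: (x _); case: (x _); case: (x _). Qed.

Lemma copy_elim (T : finType) (e : rel T) (S : {set T}) :
  has_induced_copy twoK2 e S -> exists x y x' y',
  [/\ x \in S, y \in S, x' \in S, y' \in S &
   [/\ e x y, e x' y', ~~ e x x' & [/\ ~~ e x y', ~~ e y x' & ~~ e y y']]].
Proof.
move=> /existsP [f /and3P [_ /forallP fS /forallP fe]].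
pose o0 : 'I_4 := Ordinal (isT : 0 < 4)%N.
pose o1 : 'I_4 := Ordinal (isT : 1 < 4)%N.
pose o2 : 'I_4 := Ordinal (isT : 2 < 4)%N.
pose o3 : 'I_4 := Ordinal (isT : 3 < 4)%N.
have E i j : e (f i) (f j) = twoK2 i j by move: (fe i) => /forallP /(_ j) /eqP ->.
exists (f o0), (f o1), (f o2), (f o3); split; rewrite ?fS //.
by rewrite !E.
Qed.

Definition pat3 t1 t2 t3 t4 :=
  [&& adj3 t1 t2, adj3 t3 t4, ~~ adj3 t1 t3, ~~ adj3 t1 t4, ~~ adj3 t2 t3 & ~~ adj3 t2 t4].

Definition coln (t : bool * bool * bool) : nat :=
  nth 0%N [:: 0; 2; 3; 0; 3; 1; 1; 2]%N (4 * t.1.1 + 2 * t.1.2 + t.2)%N.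
Lemma coln_lt t : (coln t < 4)%N.
Proof. by case: t => [[[] []] []]. Qed.
Definition col4 t : 'I_4 := Ordinal (coln_lt t).
Definition c4 : {ffun cube 3 -> 'I_4} := [ffun x => col4 (enc3 x)].

Lemma brute_proper3 :
  all (fun t => all (fun s => adj3 t s ==> (coln t != coln s)) all3) all3.
Proof. by vm_compute. Qed.

Lemma brute_up3 :
  all (fun t1 => all (fun t2 => all (fun t3 => all (fun t4 =>
    pat3 t1 t2 t3 t4 ==> all (fun a => all (fun b =>
      ~~ all (fun t => (coln t == a) || (coln t == b)) [:: t1; t2; t3; t4])
      (iota 0 4)) (iota 0 4)) all3) all3) all3) all3.
Proof. by vm_compute. Qed.

Lemma adj_enc3 x y : cube_adj x y = adj3 (enc3 x) (enc3 y).
Proof. by have := adj_dec3 (enc3 x) (enc3 y); rewrite !dec3K. Qed.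

Lemma c4_valid : H_avoiding_coloring twoK2 (@cube_adj 3) c4.
Proof.
apply/andP; split.
  apply/forallP => x; apply/forallP => y; apply/implyP.
  rewrite adj_enc3 !ffunE -val_eqE /=.
  by move/allP: brute_proper3 => /(_ _ (enc3_all x)) /allP /(_ _ (enc3_all y)) /implyP.
apply/forallP => a; apply/forallP => b; apply/negP.
move=> /copy_elim [x [y [x' [y' [xS yS x'S y'S [exy ex'y' n1 [n2 n3 n4]]]]]]].
move: exy ex'y' n1 n2 n3 n4; rewrite !adj_enc3 => exy ex'y' n1 n2 n3 n4.
move: xS yS x'S y'S; rewrite !inE !ffunE -!val_eqE /= => xS yS x'S y'S.
move/allP: brute_up3 => /(_ _ (enc3_all x)) /allP /(_ _ (enc3_all y))
  /allP /(_ _ (enc3_all x')) /allP /(_ _ (enc3_all y')) /implyP.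
rewrite /pat3 exy ex'y' n1 n2 n3 n4 => /(_ isT) /allP.
move=> /(_ (val a)); rewrite mem_iota ltn_ord => /(_ isT) /allP.
move=> /(_ (val b)); rewrite mem_iota ltn_ord => /(_ isT) /=.
by rewrite xS yS x'S y'S.
Qed.


Definition tri (n : nat) : bool * bool * bool := (odd n./2./2, odd n./2, odd n).
Definition EL3 : seq (nat * nat) := [:: (0, 1); (0, 2); (0, 4); (1, 3); (1, 5); (2, 3); (2, 6); (3, 7); (4, 5); (4, 6); (5, 7); (6, 7)]%N.
Definition QL3 : seq (seq nat) := [:: [:: 0; 1; 7; 6]; [:: 0; 2; 7; 5]; [:: 0; 4; 7; 3]; [:: 1; 0; 6; 7]; [:: 1; 3; 6; 4]; [:: 1; 5; 6; 2]; [:: 2; 3; 5; 4]; [:: 2; 0; 5; 7]; [:: 2; 6; 5; 1]; [:: 3; 2; 4; 5]; [:: 3; 1; 4; 6]; [:: 3; 7; 4; 0]; [:: 4; 5; 3; 2]; [:: 4; 6; 3; 1]; [:: 4; 0; 3; 7]; [:: 5; 4; 2; 3]; [:: 5; 7; 2; 0]; [:: 5; 1; 2; 6]; [:: 6; 7; 1; 0]; [:: 6; 4; 1; 3]; [:: 6; 2; 1; 5]; [:: 7; 6; 0; 1]; [:: 7; 5; 0; 2]; [:: 7; 3; 0; 4]]%N.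
Definition patL (L : seq nat) := if L is [:: a; b; c; d] then pat3 (tri a) (tri b) (tri c) (tri d) else false.
Definition nondeg (g : nat -> nat) (L : seq nat) :=
  all (fun i => all (fun j => ~~ all (fun t => (g t == g i) || (g t == g j)) L) L) L.
Definition check3 (g : nat -> nat) :=
  all (fun p => g p.1 != g p.2) EL3 && all (nondeg g) QL3.
Fixpoint gen (n : nat) (s : seq nat) : seq (seq nat) :=
  if n is n'.+1 then [seq x :: l | x <- s, l <- gen n' s] else [:: [::]].

Lemma F1 : all (fun p => (p.1 < 8) && (p.2 < 8) && adj3 (tri p.1) (tri p.2))%N EL3.
Proof. by vm_compute. Qed.
Lemma F2 : all (fun L => all (fun n => n < 8)%N L && patL L) QL3.
Proof. by vm_compute. Qed.
Lemma brute3 : all (fun L => ~~ check3 (fun n => nth 0%N L n)) (gen 8 [:: 0; 1; 2]%N).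
Proof. by vm_compute. Qed.

Lemma gen_mem (s L : seq nat) : all (mem s) L -> L \in gen (size L) s.
Proof.
elim: L => [|x L IH] //= /andP [xs Ls].
exact: (allpairs_f (fun x l => x :: l) xs (IH Ls)).
Qed.

Lemma not_col3 k : (k <= 3)%N -> ~~ H_avoiding_colorable twoK2 (@cube_adj 3) k.
Proof.
move=> k3; apply/negP; rewrite /H_avoiding_colorable => /existsP [c Hcol].
pose g n := nat_of_ord (c (dec3 (tri n))).
pose G := [seq g n | n <- iota 0 8].
have gG n : (n < 8)%N -> nth 0%N G n = g n.
  by move=> n8; rewrite (nth_map 0%N) ?size_iota // nth_iota.
have GG : G \in gen 8 [:: 0; 1; 2]%N.
  have -> : 8%N = size G by rewrite size_map size_iota.
  apply: gen_mem; apply/allP => x /mapP [n _ ->]; rewrite /g.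
  have : (c (dec3 (tri n)) < 3)%N by apply: leq_trans (ltn_ord _) k3.
  by case: (nat_of_ord _) => [|[|[|]]].
have Hp x y : cube_adj x y -> c x != c y.
  by move: Hcol => /andP [/forallP /(_ x) /forallP /(_ y) /implyP H _].
have core a b c' d' i j : pat3 (tri a) (tri b) (tri c') (tri d') ->
    ~~ all (fun t => (g t == g i) || (g t == g j)) [:: a; b; c'; d'].
  rewrite /pat3 -!adj_dec3 => /and5P [e1 e2 n1 n2 /andP [n3 n4]].
  move: Hcol => /andP [_ /forallP /(_ (c (dec3 (tri i)))) /forallP /(_ (c (dec3 (tri j)))) Hn].
  apply/negP; rewrite /= /g !val_eqE andbT => /and4P [h1 h2 h3 h4].
  move/negP: Hn; apply.
  apply: (copyP (@adj_sym 3) (@adj_irr 3) _ _ _ _ e1 e2 n1 n2 n3 n4); by rewrite inE.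
have : check3 (nth 0%N G).
  apply/andP; split.
    apply/allP => p pE; move/allP: F1 => /(_ _ pE) /andP [/andP [p1 p2] pa].
    rewrite !gG // /g val_eqE; apply: Hp; by rewrite adj_dec3.
  apply/allP => L LQ; move/allP: F2 => /(_ _ LQ) /andP [L8 pL].
  move/allP: L8 => L8.
  apply/allP => i iL; apply/allP => j jL.
  rewrite (@eq_in_all _ _ (fun t => (g t == g i) || (g t == g j))); last first.
    by move=> t tL /=; rewrite !gG // ?L8.
  by case: L LQ L8 pL iL jL => [|a [|b [|c' [|d' [|]]]]] //= _ _ pL _ _; apply: core.
by move/allP: brute3 => /(_ _ GG) /negP.
Qed.

Definition i2_1 : 'I_2 := lift ord0 ord0.
Definition dec2 (t : bool * bool) : cube 2 := [ffun i : 'I_2 => nth false [:: t.1; t.2] i].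
Definition enc2 (x : cube 2) := (x ord0, x i2_1).
Definition adj2 (t s : bool * bool) := ((t.1 != s.1) + (t.2 != s.2) == 1)%N.

Lemma adj_dec2 t s : cube_adj (dec2 t) (dec2 s) = adj2 t s.
Proof.
rewrite /cube_adj card_setord !big_ord_recl big_ord0 /= !ffunE /=.
by rewrite /adj2 addn0.
Qed.

Lemma dec2K x : dec2 (enc2 x) = x.
Proof.
apply/ffunP => i; rewrite ffunE /=.
case: i => [[|[|m]] Hm] //=; congr (x _); exact: val_inj.
Qed.

Definition all2 : seq (bool * bool) := [:: (false, false); (false, true); (true, false); (true, true)].
Lemma enc2_all x : enc2 x \in all2.
Proof. by rewrite /enc2; case: (x _); case: (x _). Qed.

Lemma adj_enc2 x y : cube_adj x y = adj2 (enc2 x) (enc2 y).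
Proof. by have := adj_dec2 (enc2 x) (enc2 y); rewrite !dec2K. Qed.

Definition par (t : bool * bool) : nat := t.1 (+) t.2.
Lemma par_lt t : (par t < 2)%N. Proof. by case: t => [[] []]. Qed.
Definition c2 : {ffun cube 2 -> 'I_2} := [ffun x => Ordinal (par_lt (enc2 x))].

Lemma brute_proper2 : all (fun t => all (fun s => adj2 t s ==> (par t != par s)) all2) all2.
Proof. by vm_compute. Qed.

Lemma brute_up2 :
  all (fun t1 => all (fun t2 => all (fun t3 => all (fun t4 =>
    ~~ [&& adj2 t1 t2, adj2 t3 t4, ~~ adj2 t1 t3, ~~ adj2 t1 t4, ~~ adj2 t2 t3 & ~~ adj2 t2 t4])
    all2) all2) all2) all2.
Proof. by vm_compute. Qed.

Lemma c2_valid : H_avoiding_coloring twoK2 (@cube_adj 2) c2.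
Proof.
apply/andP; split.
  apply/forallP => x; apply/forallP => y; apply/implyP.
  rewrite adj_enc2 !ffunE -val_eqE /=.
  by move/allP: brute_proper2 => /(_ _ (enc2_all x)) /allP /(_ _ (enc2_all y)) /implyP.
apply/forallP => a; apply/forallP => b; apply/negP.
move=> /copy_elim [x [y [x' [y' [_ _ _ _ [exy ex'y' n1 [n2 n3 n4]]]]]]].
move: exy ex'y' n1 n2 n3 n4; rewrite !adj_enc2 => exy ex'y' n1 n2 n3 n4.
move/allP: brute_up2 => /(_ _ (enc2_all x)) /allP /(_ _ (enc2_all y))
  /allP /(_ _ (enc2_all x')) /allP /(_ _ (enc2_all y')).
by rewrite exy ex'y' n1 n2 n3 n4.
Qed.

Lemma not_col2 k : (k <= 1)%N -> ~~ H_avoiding_colorable twoK2 (@cube_adj 2) k.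
Proof.
move=> k1; apply/negP; rewrite /H_avoiding_colorable => /existsP [c Hcol].
have e : cube_adj (dec2 (false, false)) (dec2 (true, false)) by rewrite adj_dec2.
move: Hcol => /andP [/forallP /(_ (dec2 (false, false))) /forallP /(_ (dec2 (true, false))) /implyP /(_ e) H _].
move: H; rewrite -val_eqE.
case: (c (dec2 (false, false))) => [[|m1] p1]; case: (c (dec2 (true, false))) => [[|m2] p2] //= _; lia.
Qed.

Theorem corollary5 :
  chi_2K2_cube 2 = 2%N /\ chi_2K2_cube 3 = 4%N /\
  forall (R : realType) (d : nat), (4 <= d)%N ->
    Num.sqrt ((d%:R / (2 * d%:R - 1)) * 2%:R ^+ d) + 2%:R^-1
      <= ((chi_2K2_cube d)%:R : R).
Proof.
split.
  rewrite /chi_2K2_cube; apply: chi_eq; first by rewrite card_cube.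
    by apply/existsP; exists c2; exact: c2_valid.
  by move=> k k2; apply: not_col2.
split.
  rewrite /chi_2K2_cube; apply: chi_eq; first by rewrite card_cube.
    by apply/existsP; exists c4; exact: c4_valid.
  by move=> k k4; apply: not_col3.
move=> R d d4; apply: real_bound; first by apply: leq_trans d4.
by apply: chi_count; apply: leq_trans d4.
Qed.
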